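(* (i) The subKautz digraph $sK(d,\ell)$ has diameter $2\ell$ whenever either $d=3$ and $\ell\ge 4$, or $d\ge 3$ and $\ell=2$. (ii) The subKautz digraph $sK(3,3)$ has diameter $5$.
   Context: The subKautz digraph $sK(d,\ell)$ ($d,\ell\ge2$) has vertex set $\{x_1\ldots x_\ell\in\mathbb Z_{d+1}^\ell : x_i\neq x_{i+1},\ i=1,\ldots,\ell-1\}$ and arcs $x_1\ldots x_\ell\to x_2\ldots x_\ell x_{\ell+1}$ for every $x_{\ell+1}\in\mathbb Z_{d+1}$ with $x_{\ell+1}\neq x_1,x_\ell$. The diameter is the maximum directed distance between ordered pairs of vertices. *)

(* Defs.v *)
From mathcomp Require Import all_boot.
Unset Printing Implicit Defensive.

(* Z_{d+1} is represented by 'I_d.+1 (only equality of symbols matters).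
   A word x_1 ... x_l is a sequence of length l. *)

Definition sK_vertex (d l : nat) (x : seq 'I_d.+1) : Prop :=
  size x = l /\ forall i, i.+1 < l -> nth ord0 x i <> nth ord0 x i.+1.

Definition sK_arc (d l : nat) (x y : seq 'I_d.+1) : Prop :=
  sK_vertex d l x /\
  exists z : 'I_d.+1, z <> nth ord0 x 0 /\ z <> nth ord0 x l.-1 /\
    y = rcons (behead x) z.

Fixpoint sK_walk (d l : nat) (k : nat) (x y : seq 'I_d.+1) : Prop :=
  match k with
  | 0 => x = y
  | k'.+1 => exists w, sK_arc d l x w /\ sK_walk d l k' w y
  end.

Definition sK_dist_le (d l D : nat) (x y : seq 'I_d.+1) : Prop :=
  exists k, k <= D /\ sK_walk d l k x y.

Definition sK_diameter (d l D : nat) : Prop :=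
  (forall x y, sK_vertex d l x -> sK_vertex d l y -> sK_dist_le d l D x y) /\
  (exists x y, sK_vertex d l x /\ sK_vertex d l y /\
     forall k, sK_walk d l k x y -> D <= k).

(* Main.v *)
Require Import Defs.
From mathcomp Require Import all_boot zify.

Lemma mkseq_shift (T : Type) (W : nat -> T) (l : nat) : 0 < l ->
  mkseq (fun j => W j.+1) l = rcons (behead (mkseq W l)) (W l).
Proof.
move=> l0; apply: (@eq_from_nth _ (W 0)).
  by rewrite size_rcons size_behead !size_mkseq; lia.
move=> i; rewrite size_mkseq => Hi.
rewrite nth_mkseq // nth_rcons size_behead size_mkseq.
case: ltnP => H1.
  by rewrite nth_behead nth_mkseq //; lia.
have -> : i = l.-1 by lia.
by rewrite eqxx; congr W; lia.
Qed.

Lemma word_walk d l k (W : nat -> 'I_d.+1) : 0 < l ->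
  (forall i, i.+1 < l -> W i <> W i.+1) ->
  (forall n, l <= n < l + k -> W n <> W n.-1 /\ W n <> W (n - l)) ->
  sK_walk d l k (mkseq (fun j => W j) l) (mkseq (fun j => W (k + j)) l).
Proof.
elim: k W => [|k IH] W l0 Hv Hc /=.
  by apply: eq_mkseq => j.
exists (mkseq (fun j => W j.+1) l); split.
  split.
    split; first by rewrite size_mkseq.
    move=> i Hi; rewrite !nth_mkseq; [exact: Hv | lia | lia].
  exists (W l).
  have [H1 H2] := Hc l ltac:(lia).
  rewrite !nth_mkseq; last lia; last lia.
  split; first by rewrite subnn in H2.
  split; first by [].
  exact: mkseq_shift.
have := IH (fun n => W n.+1) l0.
have -> : mkseq (fun j => W (k.+1 + j)) l = mkseq (fun j => W (k + j).+1) l.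
  by apply: eq_mkseq => j; rewrite addSn.
apply.
  move=> i Hi.
  case: (ltnP i.+2 l) => H; first exact: Hv.
  have [H1 _] := Hc l ltac:(lia).
  have E : l = i.+2 by lia.
  rewrite E /= in H1. by move=> E'; apply: H1; rewrite E'.
move=> n Hn; have [H1 H2] := Hc n.+1 ltac:(lia).
split; first by have -> : n.-1.+1 = n by lia.
by have <- : n.+1 - l = (n - l).+1 by lia.
Qed.

Lemma walk_word d l k (x y : seq 'I_d.+1) : 0 < l -> sK_walk d l k x y ->
  exists W : nat -> 'I_d.+1,
    (forall j, j < l -> W j = nth ord0 x j) /\
    (forall j, j < l -> W (k + j) = nth ord0 y j) /\
    (forall n, l <= n < l + k -> W n <> W n.-1 /\ W n <> W (n - l)).
Proof.
move=> l0; elim: k x => [|k IH] x /=.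
  move=> ->; exists (fun j => nth ord0 y j); split; first by [].
  split; first by []. move=> n; lia.
move=> [w [[[Hs Hv] [z [Hz0 [Hzl Ew]]]] Hw]].
have [W' [H1 [H2 H3]]] := IH _ Hw.
pose W := fun n => if n is n'.+1 then W' n' else nth ord0 x 0.
have HW : forall j, j < l -> W j = nth ord0 x j.
  case=> [|j] //= Hj; rewrite H1; last lia.
  by rewrite Ew nth_rcons size_behead Hs ifT ?nth_behead //; lia.
have Wl : W l = z.
  rewrite (_ : l = l.-1.+1) /=; last lia.
  by rewrite H1 ?Ew ?nth_rcons ?size_behead ?Hs ?ltnn ?eqxx //; lia.
exists W; split; first exact: HW.
split; first by move=> j Hj; rewrite addSn /= H2.
move=> n Hn.
case: (ltngtP n l) => Hnl; first lia.
  have -> : n = (n.-1).+1 by lia.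
  rewrite /=.
  have -> : n.-1.+1 - l = (n.-1 - l).+1 by lia.
  rewrite /=.
  have -> : n.-1 = (n.-1.-1).+1 by lia.
  rewrite /=.
  have := H3 n.-1.-1.+1 ltac:(lia). by [].
subst n; rewrite Wl subnn (HW 0) // (HW l.-1); last lia.
by split.
Qed.

Lemma mkseq_eq (T : Type) (x0 : T) (W : nat -> T) (s : seq T) l :
  size s = l -> (forall j, j < l -> W j = nth x0 s j) -> mkseq W l = s.
Proof.
move=> Hs HW; apply: (@eq_from_nth _ x0); first by rewrite size_mkseq.
by move=> i; rewrite size_mkseq => Hi; rewrite nth_mkseq // HW.
Qed.

Lemma mid_walk d l r (x y : seq 'I_d.+1) (m : nat -> 'I_d.+1) :
  0 < l -> r <= l -> sK_vertex d l x -> sK_vertex d l y ->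
  (forall j, j < r -> m j <> nth ord0 x j /\
      m j <> (if j == 0 then nth ord0 x l.-1 else m j.-1)) ->
  (forall j, j < l -> l <= r + j -> nth ord0 y j <> m (r + j - l)) ->
  (forall j, r + j < l -> nth ord0 y j <> nth ord0 x (r + j)) ->
  nth ord0 y 0 <> (if r == 0 then nth ord0 x l.-1 else m r.-1) ->
  sK_walk d l (l + r) x y.
Proof.
move=> l0 rl [Hsx Hvx] [Hsy Hvy] Hm Hym Hyx Hy0.
pose W := fun n => if n < l then nth ord0 x n else
   if n < l + r then m (n - l) else nth ord0 y (n - (l + r)).
have Wx : forall j, j < l -> W j = nth ord0 x j by move=> j Hj; rewrite /W Hj.
have Wm : forall j, j < r -> W (l + j) = m j.
  by move=> j Hj; rewrite /W ifF ?ifT; [congr m| |]; lia.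
have Wy : forall j, W (l + r + j) = nth ord0 y j.
  by move=> j; rewrite /W ifF ?ifF; [congr nth| |]; lia.
have := @word_walk d l (l + r) W l0.
rewrite (@mkseq_eq _ ord0 _ _ _ Hsx Wx) (@mkseq_eq _ ord0 _ _ _ Hsy); last by move=> j _; rewrite Wy.
apply.
  by move=> i Hi; rewrite !Wx; [exact: Hvx| lia| lia].
move=> n Hn.
case: (ltnP n (l + r)) => H.
  have -> : n = l + (n - l) by lia.
  rewrite Wm; last lia.
  have [A B] := Hm (n - l) ltac:(lia).
  have -> : l + (n - l) - l = n - l by lia.
  rewrite (Wx (n - l)); last lia.
  split; last by [].
  case: eqP B => E B.
    have -> : (l + (n - l)).-1 = l.-1 by lia.
    by rewrite Wx //; lia.
  have -> : (l + (n - l)).-1 = l + (n - l).-1 by lia.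
  by rewrite Wm //; lia.
have -> : n = l + r + (n - (l + r)) by lia.
set j := n - (l + r).
rewrite Wy.
have -> : l + r + j - l = r + j by lia.
split.
  case: (posnP j) => Ej.
    rewrite Ej addn0 in Hy0 *.
    case: eqP Hy0 => E Hy0.
      by rewrite E addn0 Wx //; lia.
    have -> : (l + r).-1 = l + r.-1 by lia.
    by rewrite Wm //; lia.
  have -> : (l + r + j).-1 = l + r + j.-1 by lia.
  rewrite Wy.
  have := Hvy j.-1 ltac:(lia).
  have -> : j.-1.+1 = j by lia.
  by move=> ?; apply: nesym.
case: (ltnP (r + j) l) => E.
  by rewrite Wx //; apply: Hyx.
have -> : r + j = l + (r + j - l) by lia.
rewrite Wm; last lia.
apply: Hym; lia.
Qed.

Lemma avoid3 d (d3 : 3 <= d) (a b c : 'I_d.+1) :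
  exists e : 'I_d.+1, e <> a /\ e <> b /\ e <> c.
Proof.
pose A := [pred z : 'I_d.+1 | z \in [:: a; b; c]].
have H1 : #|A| <= 3.
  apply: leq_trans (card_size [:: a; b; c]); apply: subset_leq_card.
  by apply/subsetP => z; rewrite inE.
have H2 := cardC A; rewrite card_ord in H2.
have : 0 < #|[predC A]| by rewrite -(ltn_add2l #|A|) addn0 H2; lia.
move=> /card_gt0P [e]; rewrite !inE => /norP [/eqP Ha /norP [/eqP Hb /eqP Hc]].
by exists e.
Qed.

Definition valid d l (x y : seq 'I_d.+1) (s : nat -> 'I_d.+1) j :=
  s j <> nth ord0 x j /\ s j <> nth ord0 y j /\
  s j <> (if j == 0 then nth ord0 x l.-1 else s j.-1).

Definition Good d l (x y : seq 'I_d.+1) i :=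
  forall c, exists s, (forall j, j < i -> valid d l x y s j) /\ s i.-1 <> c.

Lemma Good_step d l x y i : 3 <= d -> 0 < i -> Good d l x y i -> Good d l x y i.+1.
Proof.
move=> d3 i0 G c.
have [e [E1 [E2 E3]]] := @avoid3 d d3 (nth ord0 x i) (nth ord0 y i) c.
have [s [Hs Hne]] := G e.
exists (fun j => if j == i then e else s j); split; last by rewrite /= eqxx.
move=> j Hj; rewrite /valid /=.
case: (ltngtP j i) => Eji; [|lia|].
  have [A [B C]] := Hs j Eji.
  split; first by []. split; first by [].
  by case: eqP C => // _ C; rewrite ifF //; lia.
subst j; rewrite ifF; last lia. rewrite ifF; last lia.
by split; [|split] => // E; apply: Hne.
Qed.

Lemma Good_iter d l x y i k : 3 <= d -> 0 < i -> Good d l x y i -> Good d l x y (i + k).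
Proof.
move=> d3 i0 G; elim: k => [|k IH]; first by rewrite addn0.
by rewrite addnS; apply: Good_step => //; lia.
Qed.

Lemma full_walk d l (x y : seq 'I_d.+1) s : 0 < l ->
  sK_vertex d l x -> sK_vertex d l y ->
  (forall j, j < l -> valid d l x y s j) -> s l.-1 <> nth ord0 y 0 ->
  sK_walk d l (l + l) x y.
Proof.
move=> l0 Vx Vy Hv Hl.
apply: (@mid_walk d l l x y s) => //.
- by move=> j Hj; have [A [B C]] := Hv j Hj.
- move=> j Hj _; have [A [B C]] := Hv j Hj.
  have -> : l + j - l = j by lia.
  by move=> E; apply: B.
- move=> j; lia.
- by rewrite ifF; [move=> E; apply: Hl|lia].
Qed.

Lemma claim d l (x y : seq 'I_d.+1) i : 3 <= d -> 0 < i ->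
  Good d l x y i \/ exists s, (forall j, j < i -> valid d l x y s j) /\
     (forall j, j.+1 < i -> s j <> nth ord0 y j.+1).
Proof.
move=> d3; elim: i => [|i IH] // _.
case: (posnP i) => [->|i0].
  have [e [E1 [E2 E3]]] := @avoid3 d d3 (nth ord0 x 0) (nth ord0 y 0) (nth ord0 x l.-1).
  right; exists (fun _ => e); split; last by move=> j; lia.
  by move=> j; rewrite ltnS leqn0 => /eqP ->; rewrite /valid.
case: (IH i0) => [G|[s [Hs Hy]]].
  by left; apply: Good_step.
case: (eqVneq (s i.-1) (nth ord0 y i)) => Esy.
  left => c.
  have [e [E1 [E2 E3]]] := @avoid3 d d3 (nth ord0 x i) (nth ord0 y i) c.
  exists (fun j => if j == i then e else s j); split; last by rewrite /= eqxx.
  move=> j Hj; rewrite /valid /=.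
  case: (ltngtP j i) => Eji; [|lia|].
    have [A [B C]] := Hs j Eji.
    split; first by []. split; first by [].
    by case: eqP C => // _ C; rewrite ifF //; lia.
  subst j; rewrite ifF; last lia. rewrite ifF; last lia.
  by split; [|split] => // E; apply: E2; rewrite E.
right.
have [e [E1 [E2 E3]]] := @avoid3 d d3 (nth ord0 x i) (nth ord0 y i) (s i.-1).
exists (fun j => if j == i then e else s j); split.
  move=> j Hj; rewrite /valid /=.
  case: (ltngtP j i) => Eji; [|lia|].
    have [A [B C]] := Hs j Eji.
    split; first by []. split; first by [].
    by case: eqP C => // _ C; rewrite ifF //; lia.
  subst j; rewrite ifF; last lia. rewrite ifF; last lia.
  by [].
move=> j Hj /=; rewrite ifF; last lia.
case: (ltngtP j.+1 i) => E; [exact: Hy|lia|].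
by subst i; move/eqP: Esy.
Qed.

Lemma distinct4 d (d3 : 3 <= d) (a b c f : 'I_d.+1) :
  (forall e : 'I_d.+1, ~~ [&& e != a, e != b, e != c & e != f]) ->
  [/\ c <> f, c <> a & b <> f].
Proof.
move=> H; split=> E.
- have [e [E1 [E2 E3]]] := @avoid3 d d3 a b c.
  have := H e; rewrite -E; move/eqP: E1 => -> ; move/eqP: E2 => ->; move/eqP: E3 => -> //.
- have [e [E1 [E2 E3]]] := @avoid3 d d3 a b f.
  have := H e; rewrite E; move/eqP: E1 => -> ; move/eqP: E2 => ->; move/eqP: E3 => -> //.
- have [e [E1 [E2 E3]]] := @avoid3 d d3 a c f.
  have := H e; rewrite E; move/eqP: E1 => -> ; move/eqP: E2 => ->; move/eqP: E3 => -> //.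
Qed.

Lemma upper d l (x y : seq 'I_d.+1) : 3 <= d -> 2 <= l ->
  sK_vertex d l x -> sK_vertex d l y -> sK_dist_le d l (2 * l) x y.
Proof.
move=> d3 l2 Vx Vy.
case: (@claim d l x y l.-1 d3 ltac:(lia)) => [G|[s [Hs Hy]]].
  have := @Good_iter d l x y l.-1 1 d3 ltac:(lia) G.
  have -> : l.-1 + 1 = l by lia.
  move=> /(_ (nth ord0 y 0)) [s [Hs Hne]].
  exists (l + l); split; first lia.
  by apply: (@full_walk d l x y s) => //; lia.
case: (pickP (fun e => [&& e != nth ord0 x l.-1, e != nth ord0 y l.-1,
            e != nth ord0 y 0 & e != s l.-2])) => [e /and4P [/eqP E1 /eqP E2 /eqP E3 /eqP E4]|H].
  exists (l + l); split; first lia.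
  apply: (@full_walk d l x y (fun j => if j == l.-1 then e else s j)) => //; [lia| |by rewrite /= eqxx].
  move=> j Hj; rewrite /valid /=.
  case: (ltngtP j l.-1) => Eji; [|lia|].
    have [A [B C]] := Hs j Eji.
    split; first by []. split; first by [].
    by case: eqP C => // _ C; rewrite ifF //; lia.
  subst j; rewrite ifF; last lia. rewrite ifF; last lia.
  by [].
have [D1 D2 D3] := @distinct4 d d3 (nth ord0 x l.-1) (nth ord0 y l.-1)
   (nth ord0 y 0) (s l.-2) (fun e => negbT (H e)).
exists (l + l.-1); split; first lia.
apply: (@mid_walk d l l.-1 x y s); [lia|lia|exact Vx|exact Vy| | | |].
- by move=> j Hj; have [A [B C]] := Hs j Hj.
- move=> j Hj Hlj.
  case: (ltngtP (l.-1 + j - l).+1 l.-1) => E.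
  + by move=> E'; apply: (Hy _ E); rewrite -E'; congr nth; lia.
  + lia.
  + have -> : l.-1 + j - l = l.-2 by lia.
    have -> : j = l.-1 by lia.
    by move=> E'; apply: D3.
- move=> j Hj; have -> : j = 0 by lia.
  by rewrite addn0.
- rewrite ifF; [|lia]. by move=> E; apply: D1.
Qed.

Lemma even_core (m l k : nat) (V : nat -> nat) : 2 <= m -> l = 2 * m ->
  (forall n, V n < 4) ->
  (forall j, j < l.-1 -> V j = j %% 2) -> V l.-1 = 2 ->
  (forall n, n = k -> V n = 2) ->
  (forall n j, n = k + j -> 1 <= j < l -> V n = (j + 1) %% 2) ->
  (forall n a b, l <= n < l + k -> a = n.-1 -> b = n - l -> V n <> V a /\ V n <> V b) ->
  2 * l <= k.
Proof.
move=> m2 El HV Hx1 Hx2 Hy0 Hy1 Hc.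
case: (ltnP k (2 * l)) => // Hk; exfalso.
case: (ltnP k l) => Hkl.
  case: (ltnP k l.-1) => Hk1.
    have := Hx1 k Hk1; have := Hy0 k erefl; lia.
  have := Hy1 l 1 ltac:(lia) ltac:(lia).
  have := Hc l l.-1 0 ltac:(lia) erefl ltac:(lia).
  have := Hx1 0 ltac:(lia). lia.
case: (eqVneq (k - l) l.-1) => Er.
  have := Hc k k.-1 l.-1 ltac:(lia) erefl ltac:(lia).
  have := Hy0 k erefl. lia.
case: (eqVneq ((k - l) %% 2) 1) => Po.
  have := Hy1 (k + 1) 1 erefl ltac:(lia).
  have := Hc (k + 1) k (k + 1 - l) ltac:(lia) ltac:(lia) erefl.
  have := Hx1 (k + 1 - l) ltac:(lia). lia.
case: (eqVneq k l) => Ek.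
  have := Hc k l.-1 0 ltac:(lia) ltac:(lia) ltac:(lia).
  have := Hy0 k erefl. lia.
have P : forall i, i < k - l -> forall n, n = l + i -> V n = 3 - i %% 2.
  elim=> [|i IH] Hi n En.
    have := Hc n l.-1 0 ltac:(lia) ltac:(lia) ltac:(lia).
    have := Hx1 0 ltac:(lia).
    have := Hc (l + l) (l + l).-1 n ltac:(lia) erefl ltac:(lia).
    have := Hy1 (l + l) (l - (k - l)) ltac:(lia) ltac:(lia).
    have := HV n. lia.
  have := IH ltac:(lia) (l + i) erefl.
  have := Hc n (l + i) i.+1 ltac:(lia) ltac:(lia) ltac:(lia).
  have := Hx1 i.+1 ltac:(lia).
  have := Hc (l + l + i.+1) (l + l + i.+1).-1 n ltac:(lia) erefl ltac:(lia).
  have := Hy1 (l + l + i.+1) (l - (k - l) + i.+1) ltac:(lia) ltac:(lia).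
  have := HV n. lia.
have := P (k - l).-1 ltac:(lia) k.-1 ltac:(lia).
have := Hc k k.-1 (k - l) ltac:(lia) erefl erefl.
have := Hy0 k erefl. lia.
Qed.

Lemma odd_core (m l k : nat) (V : nat -> nat) : 2 <= m -> l = 2 * m + 1 ->
  (forall n, V n < 4) ->
  (forall j, j < l - 2 -> V j = j %% 2) -> V (l - 2) = 2 -> V (l - 1) = 1 ->
  (forall n, n = k -> V n = 1) ->
  (forall n, n = k + 1 -> V n = 2) ->
  (forall n, n = k + 2 -> V n = 3) ->
  (forall n j, n = k + j -> 3 <= j <= l - 2 -> V n = (j + 1) %% 2) ->
  (forall n, n = k + (l - 1) -> V n = 2) ->
  (forall n a b, l <= n < l + k -> a = n.-1 -> b = n - l -> V n <> V a /\ V n <> V b) ->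
  2 * l <= k.
Proof.
move=> m2 El HV Hx1 Hx2 Hx3 Hy0 Hy1 Hy2 Hy3 Hy4 Hc.
case: (ltnP k (2 * l)) => // Hk; exfalso.
case: (ltnP k l) => Hkl.
  case: (ltnP k (l - 2)) => Hk1.
    have := Hx1 k Hk1; have := Hy0 k erefl.
    case: (ltnP (k + 1) (l - 2)) => Hk2.
      have := Hx1 (k + 1) Hk2; have := Hy1 (k + 1) erefl. lia.
    lia.
  case: (eqVneq k (l - 2)) => Ek.
    have := Hy0 (l - 2) ltac:(lia). lia.
  have := Hy3 (l + 2) 3 ltac:(lia) ltac:(lia).
  have := Hc (l + 2) (l + 1) 2 ltac:(lia) ltac:(lia) ltac:(lia).
  have := Hx1 2 ltac:(lia). lia.
case: (eqVneq (k - l) (l - 2)) => Er; last first.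
  case: (eqVneq ((k - l) %% 2) 1) => Po.
    have := Hc k k.-1 (k - l) ltac:(lia) erefl erefl.
    have := Hx1 (k - l) ltac:(lia).
    have := Hy0 k erefl. lia.
  case: (eqVneq (k - l) (l - 3)) => E3.
    have := Hc (k + 1) k (l - 2) ltac:(lia) ltac:(lia) ltac:(lia).
    have := Hy1 (k + 1) erefl. lia.
  case: (eqVneq (k - l) (l - 1)) => E1.
    have := Hc k k.-1 (l - 1) ltac:(lia) erefl ltac:(lia).
    have := Hy0 k erefl. lia.
  case: (eqVneq k l) => E0.
    have := Hc k (l - 1) 0 ltac:(lia) ltac:(lia) ltac:(lia).
    have := Hy0 k erefl. lia.
  have := Hy3 (k + (l - 1 - (k - l))) (l - 1 - (k - l)) erefl ltac:(lia).
  have := Hc (k + (l - 1 - (k - l))) (k + (l - 1 - (k - l))).-1 (l - 1)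
     ltac:(lia) erefl ltac:(lia).
  lia.
have P : forall i, i <= l - 4 -> forall n, n = l + i -> V n = 2 + i %% 2.
  elim=> [|i IH] Hi n En.
    have := Hc n (l - 1) 0 ltac:(lia) ltac:(lia) ltac:(lia).
    have := Hx1 0 ltac:(lia).
    have := Hc (k + 2) (k + 2).-1 n ltac:(lia) erefl ltac:(lia).
    have := Hy2 (k + 2) erefl.
    have := HV n. lia.
  have := IH ltac:(lia) (l + i) erefl.
  have := Hc n (l + i) i.+1 ltac:(lia) ltac:(lia) ltac:(lia).
  have := Hx1 i.+1 ltac:(lia).
  have := Hc (k + (i + 3)) (k + (i + 3)).-1 n ltac:(lia) erefl ltac:(lia).
  have := Hy3 (k + (i + 3)) (i + 3) erefl ltac:(lia).
  have := HV n. lia.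
have := P (l - 4) ltac:(lia) (l + (l - 4)) erefl.
have := Hc (l + (l - 3)) (l + (l - 4)) (l - 3) ltac:(lia) ltac:(lia) ltac:(lia).
have := Hx1 (l - 3) ltac:(lia).
have := Hc (k + (l - 1)) (k + (l - 1)).-1 (l + (l - 3)) ltac:(lia) erefl ltac:(lia).
have := Hy4 (k + (l - 1)) erefl.
have := HV (l + (l - 3)).
have := Hc k (l + (l - 3)) (k - l) ltac:(lia) ltac:(lia) erefl.
have := Hy0 k erefl. lia.
Qed.

Lemma two_core k (V : nat -> nat) :
  V 0 = 0 -> V 1 = 1 ->
  (forall n, n = k -> V n = 1) -> (forall n, n = k + 1 -> V n = 0) ->
  (forall n a b, 2 <= n < 2 + k -> a = n.-1 -> b = n - 2 -> V n <> V a /\ V n <> V b) ->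
  4 <= k.
Proof.
move=> H0 H1 Hy0 Hy1 Hc.
case: (ltnP k 4) => // Hk; exfalso.
case: (posnP k) => [Ek|Hk0].
  have := Hy0 0 ltac:(lia). lia.
case: (eqVneq k 1) => E1.
  have := Hy1 2 ltac:(lia). have := Hc 2 1 0 ltac:(lia) erefl erefl. lia.
case: (eqVneq k 2) => E2.
  have := Hy0 2 ltac:(lia). have := Hc 2 1 0 ltac:(lia) erefl erefl. lia.
have := Hy0 3 ltac:(lia). have := Hc 3 2 1 ltac:(lia) erefl erefl. lia.
Qed.

Fixpoint eqs d (x y : seq 'I_d.+1) : bool :=
  match x, y with
  | [::], [::] => true
  | a :: x', b :: y' => eqn (nat_of_ord a) (nat_of_ord b) && eqs d x' y'
  | _, _ => false
  end.

Fixpoint wb d l (A : seq 'I_d.+1) k (x y : seq 'I_d.+1) : bool :=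
  if k is k'.+1 then
    has (fun z : 'I_d.+1 => [&& ~~ eqn z (nth ord0 x 0), ~~ eqn z (nth ord0 x l.-1) &
        wb d l A k' (rcons (behead x) z) y]) A
  else eqs d x y.

Definition O4 : seq 'I_4 := [:: @Ordinal 4 0 isT; @Ordinal 4 1 isT; @Ordinal 4 2 isT; @Ordinal 4 3 isT].

Definition bigcheck : bool :=
  all (fun a : 'I_4 => all (fun b : 'I_4 => all (fun c : 'I_4 =>
  all (fun a' : 'I_4 => all (fun b' : 'I_4 => all (fun c' : 'I_4 =>
   (~~ eqn a b && ~~ eqn b c && ~~ eqn a' b' && ~~ eqn b' c') ==>
   has (fun k => wb 3 3 O4 k [:: a; b; c] [:: a'; b'; c']) (iota 0 6)) O4) O4) O4) O4) O4) O4.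

Lemma bigcheck_ok : bigcheck = true.
Proof. vm_compute. reflexivity. Qed.

Lemma eqsP d (x y : seq 'I_d.+1) : eqs d x y -> x = y.
Proof.
elim: x y => [|a x IH] [|b y] //= /andP [/eqnP E H].
by rewrite (IH _ H); congr cons; apply: val_inj.
Qed.

Lemma eqs_refl d (x : seq 'I_d.+1) : eqs d x x.
Proof. by elim: x => //= a x ->; rewrite andbT; apply/eqnP. Qed.

Lemma neqnP d (a b : 'I_d.+1) : ~~ eqn a b -> a <> b.
Proof. by move=> H E; move: H; rewrite E; move/negP; apply; apply/eqnP. Qed.

Lemma neqnP' d (a b : 'I_d.+1) : a <> b -> ~~ eqn a b.
Proof. by move=> H; apply/negP => /eqnP E; apply: H; apply: val_inj. Qed.

Lemma vertex_step d l (x : seq 'I_d.+1) z : sK_vertex d l x -> 0 < l ->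
  z <> nth ord0 x l.-1 -> sK_vertex d l (rcons (behead x) z).
Proof.
move=> [Hs Hv] l0 Hz; split; first by rewrite size_rcons size_behead Hs; lia.
move=> i Hi; rewrite !nth_rcons size_behead Hs.
case: (ltnP i.+1 l.-1) => H.
  rewrite ifT; last lia.
  by rewrite !nth_behead; apply: Hv; lia.
have E : i.+1 = l.-1 by lia.
rewrite ifT; last lia.
rewrite nth_behead E eqxx.
by move=> E'; apply: Hz.
Qed.

Lemma wb_sound d l A k (x y : seq 'I_d.+1) : 0 < l -> sK_vertex d l x ->
  wb d l A k x y -> sK_walk d l k x y.
Proof.
move=> l0; elim: k x => [|k IH] x Vx /=; first by move/eqsP.
move/hasP => [z _ /and3P [H1 H2 H3]].
exists (rcons (behead x) z); split.
  split; first by [].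
  by exists z; split; [exact: neqnP| split; [exact: neqnP|]].
apply: IH H3; apply: vertex_step => //; exact: neqnP.
Qed.

Lemma wb_complete d l A k (x y : seq 'I_d.+1) : (forall z, z \in A) ->
  sK_walk d l k x y -> wb d l A k x y.
Proof.
move=> HA; elim: k x => [|k IH] x /=; first by move=> ->; apply: eqs_refl.
move=> [w [[_ [z [H1 [H2 Ew]]]] Hw]].
apply/hasP; exists z; first exact: HA.
rewrite !neqnP' //=; rewrite -Ew; exact: IH.
Qed.

Lemma O4_all (z : 'I_4) : z \in O4.
Proof. by case: z => [[|[|[|[|?]]]] ?]. Qed.

Definition x33 : seq 'I_4 := [:: @Ordinal 4 0 isT; @Ordinal 4 1 isT; @Ordinal 4 0 isT].
Definition y33 : seq 'I_4 := [:: @Ordinal 4 1 isT; @Ordinal 4 2 isT; @Ordinal 4 0 isT].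

Lemma check33 : all (fun k => ~~ wb 3 3 O4 k x33 y33) (iota 0 5) = true.
Proof. vm_compute. reflexivity. Qed.

Lemma diam33 : sK_diameter 3 3 5.
Proof.
split.
  move=> x y [Hsx Hvx] [Hsy Hvy].
  case: x Hsx Hvx => [|a [|b [|c [|? ?]]]] // _ Hvx.
  case: y Hsy Hvy => [|a' [|b' [|c' [|? ?]]]] // _ Hvy.
  have := bigcheck_ok.
  move=> /allP /(_ a (O4_all a)) /allP /(_ b (O4_all b)) /allP /(_ c (O4_all c)).
  move=> /allP /(_ a' (O4_all a')) /allP /(_ b' (O4_all b')) /allP /(_ c' (O4_all c')).
  move=> /implyP H.
  have N1 := Hvx 0 erefl. have N2 := Hvx 1 erefl.
  have N3 := Hvy 0 erefl. have N4 := Hvy 1 erefl.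
  have := H ltac:(by rewrite !neqnP').
  move=> /hasP [k Hk Hw].
  exists k; split; first by rewrite mem_iota in Hk; lia.
  by apply: (@wb_sound 3 3 O4) Hw => //; split => //; apply: Hvx.
exists x33, y33; split.
  by split => // [[|[|i]]] //.
split; first by split => // [[|[|i]]] //.
move=> k Hw; case: (ltnP k 5) => // Hk.
have := @wb_complete 3 3 O4 _ _ _ O4_all Hw.
move/allP: check33 => /(_ k); rewrite mem_iota => /(_ ltac:(lia)).
by move/negP.
Qed.

Definition seqf d l (f : nat -> nat) : seq 'I_d.+1 :=
  mkseq (fun j => (inord (f j) : 'I_d.+1)) l.

Lemma vertex_seqf d l f : (forall j, f j <= d) ->
  (forall i, i.+1 < l -> f i <> f i.+1) -> sK_vertex d l (seqf d l f).
Proof.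
move=> Hb Hv; split; first by rewrite size_mkseq.
move=> i Hi; rewrite !nth_mkseq; [|lia|lia].
move/(congr1 (@nat_of_ord _)); rewrite !inordK; [exact: Hv| |]; apply: (leq_ltn_trans (Hb _)); lia.
Qed.

Lemma lower_conn d l (f g : nat -> nat) k : 0 < l ->
  (forall j, f j <= d) -> (forall j, g j <= d) ->
  sK_walk d l k (seqf d l f) (seqf d l g) ->
  exists V : nat -> nat, (forall n, V n < d.+1) /\
    (forall j, j < l -> V j = f j) /\
    (forall n j, n = k + j -> j < l -> V n = g j) /\
    (forall n a b, l <= n < l + k -> a = n.-1 -> b = n - l -> V n <> V a /\ V n <> V b).
Proof.
move=> l0 Hf Hg Hw.
have [W [Hx [Hy Hc]]] := @walk_word d l k _ _ l0 Hw.
exists (fun n => nat_of_ord (W n)); split; first by move=> n; apply: ltn_ord.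
split.
  by move=> j Hj; rewrite Hx // nth_mkseq // inordK //; apply: (leq_ltn_trans (Hf _)).
split.
  by move=> n j -> Hj; rewrite Hy // nth_mkseq // inordK //; apply: (leq_ltn_trans (Hg _)).
move=> n a b Hn -> ->; have [A B] := Hc n Hn.
by split => E; [apply: A|apply: B]; apply: val_inj.
Qed.

Definition fxe l j := if j == l.-1 then 2 else j %% 2.
Definition fye (l j : nat) := if j == 0 then 2 else (j + 1) %% 2.
Definition fxo l j := if j == l - 1 then 1 else if j == l - 2 then 2 else j %% 2.
Definition fyo l j := if j == 0 then 1 else if j == 1 then 2 else if j == 2 then 3
  else if j == l - 1 then 2 else (j + 1) %% 2.
Definition fx2 (j : nat) := if j == 0 then 0 else 1.
Definition fy2 (j : nat) := if j == 0 then 1 else 0.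

Ltac solve_if := repeat (case: eqP => ? /=); lia.

Lemma diam_even l : 4 <= l -> l %% 2 = 0 -> sK_diameter 3 l (2 * l).
Proof.
move=> l4 Hp; split.
  by move=> x y Vx Vy; apply: upper => //; lia.
exists (seqf 3 l (fxe l)), (seqf 3 l (fye l)).
split; first by apply: vertex_seqf => [j|i Hi]; rewrite /fxe; solve_if.
split; first by apply: vertex_seqf => [j|i Hi]; rewrite /fye; solve_if.
move=> k Hw.
have [V [HV [Hx [Hy Hc]]]] := @lower_conn 3 l (fxe l) (fye l) k ltac:(lia)
   (fun j => ltac:(rewrite /fxe; solve_if)) (fun j => ltac:(rewrite /fye; solve_if)) Hw.
apply: (@even_core (l %/ 2) l k V) => //.
- lia.
- lia.
- by move=> j Hj; rewrite Hx; [rewrite /fxe; solve_if|lia].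
- by rewrite Hx; [rewrite /fxe; solve_if|lia].
- by move=> n En; rewrite (Hy n 0); [rewrite /fye; solve_if|lia|lia].
- by move=> n j En Hj; rewrite (Hy n j); [rewrite /fye; solve_if|lia|lia].
Qed.

Lemma diam_odd l : 4 <= l -> l %% 2 = 1 -> sK_diameter 3 l (2 * l).
Proof.
move=> l4 Hp; split.
  by move=> x y Vx Vy; apply: upper => //; lia.
exists (seqf 3 l (fxo l)), (seqf 3 l (fyo l)).
split; first by apply: vertex_seqf => [j|i Hi]; rewrite /fxo; solve_if.
split; first by apply: vertex_seqf => [j|i Hi]; rewrite /fyo; solve_if.
move=> k Hw.
have [V [HV [Hx [Hy Hc]]]] := @lower_conn 3 l (fxo l) (fyo l) k ltac:(lia)
   (fun j => ltac:(rewrite /fxo; solve_if)) (fun j => ltac:(rewrite /fyo; solve_if)) Hw.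
apply: (@odd_core (l %/ 2) l k V) => //.
- lia.
- lia.
- by move=> j Hj; rewrite Hx; [rewrite /fxo; solve_if|lia].
- by rewrite Hx; [rewrite /fxo; solve_if|lia].
- by rewrite Hx; [rewrite /fxo; solve_if|lia].
- by move=> n En; rewrite (Hy n 0); [rewrite /fyo; solve_if|lia|lia].
- by move=> n En; rewrite (Hy n 1); [rewrite /fyo; solve_if|lia|lia].
- by move=> n En; rewrite (Hy n 2); [rewrite /fyo; solve_if|lia|lia].
- by move=> n j En Hj; rewrite (Hy n j); [rewrite /fyo; solve_if|lia|lia].
- by move=> n En; rewrite (Hy n (l - 1)); [rewrite /fyo; solve_if|lia|lia].
Qed.

Lemma diam_two d : 3 <= d -> sK_diameter d 2 4.
Proof.
move=> d3; split.
  by move=> x y Vx Vy; apply: upper.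
exists (seqf d 2 fx2), (seqf d 2 fy2).
split; first by apply: vertex_seqf => [j|i Hi]; rewrite /fx2; solve_if.
split; first by apply: vertex_seqf => [j|i Hi]; rewrite /fy2; solve_if.
move=> k Hw.
have [V [HV [Hx [Hy Hc]]]] := @lower_conn d 2 fx2 fy2 k ltac:(lia)
   (fun j => ltac:(rewrite /fx2; solve_if)) (fun j => ltac:(rewrite /fy2; solve_if)) Hw.
apply: (@two_core k V) => //.
- by rewrite Hx.
- by rewrite Hx.
- by move=> n En; rewrite (Hy n 0); [|lia|lia].
- by move=> n En; rewrite (Hy n 1); [|lia|lia].
Qed.

Theorem corollary1 :
  (forall d l : nat, 2 <= d -> 2 <= l ->
     ((d = 3 /\ 4 <= l) \/ (3 <= d /\ l = 2)) ->
     sK_diameter d l (2 * l)) /\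
  sK_diameter 3 3 5.
Proof.
split; last exact: diam33.
move=> d l d2 l2 [[-> l4]|[d3 ->]].
  case: (eqVneq (l %% 2) 0) => Hp.
    exact: diam_even.
  by apply: diam_odd => //; lia.
exact: diam_two.
Qed.
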